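(* Let $i,j\in\mathbb{N}$ and $n\in\mathbb{N}_0$. If $d_j(n+1)=d_i(n)\pm1$, then $d_j(n+1)+d_i(n)=d_\ell(2n+1)$ for some $\ell\in\{3,i+1,j+1\}$.
   Context: For $i\in\mathbb{N}$ and $n\in\mathbb{N}_0$, $d_i(n)=2^{i-1}-\left|(n\bmod 2^i)-2^{i-1}\right|$. *)

(* Defs.v *)
From mathcomp Require Import all_boot.
(* d_i(n) = 2^(i-1) - | (n mod 2^i) - 2^(i-1) |, computed in nat.
   The absolute difference |r - h| of naturals is (r - h) + (h - r)
   (truncated subtractions); the result is always <= 2^(i-1), so the
   outer truncated subtraction is exact. *)
Definition d (i n : nat) : nat :=
  let r := n %% 2 ^ i in
  let h := 2 ^ i.-1 in
  h - ((r - h) + (h - r)).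

(* Main.v *)
Require Import Defs.
From mathcomp Require Import all_boot.
From mathcomp Require Import zify.

Definition D (p r : nat) : nat := p - ((r - p) + (p - r)).

Lemma dm k m : d k.+1 m = D (2^k) (m %% (2 * 2^k)).
Proof. by rewrite /d /D expnS. Qed.

Lemma modS N m : 0 < N ->
  m.+1 %% N = if (m %% N).+1 == N then 0 else (m %% N).+1.
Proof.
move=> N0; rewrite -addn1 -modnDml addn1.
have := ltn_pmod m N0; case: eqP => [->|ne] h; first by rewrite modnn.
by rewrite modn_small //; lia.
Qed.

Lemma mod2 N m : 0 < N -> (2 * m + 1) %% (2 * N) = 2 * (m %% N) + 1.
Proof.
move=> N0; rewrite {1}(divn_eq m N).
have -> : 2 * (m %/ N * N + m %% N) + 1 = m %/ N * (2 * N) + (2 * (m %% N) + 1).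
  by rewrite mulnDr mulnA (mulnC 2) -mulnA addnA.
rewrite modnMDl modn_small //; have := ltn_pmod m N0; lia.
Qed.

Lemma step k m : 0 < k -> d k m.+1 = d k m + 1 \/ d k m = d k m.+1 + 1.
Proof.
case: k => // k _; rewrite !dm modS ?muln_gt0 ?expn_gt0 //.
have := ltn_pmod m (_ : 0 < 2 * 2^k); have p0 : 0 < 2^k by rewrite expn_gt0.
move=> /(_ ltac:(lia)).
case: eqP; rewrite /D; lia.
Qed.

Lemma mid k m : 0 < k -> d k m + d k m.+1 = d k.+1 (2 * m + 1).
Proof.
case: k => // k _; rewrite !dm modS ?muln_gt0 ?expn_gt0 //.
have p0 : 0 < 2^k by rewrite expn_gt0.
rewrite [2 ^ k.+1]expnS mod2 ?muln_gt0 //.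
have := ltn_pmod m (_ : 0 < 2 * 2^k) => /(_ ltac:(lia)).
case: eqP; rewrite /D; lia.
Qed.

Lemma bound k m : 0 < k -> d k m <= 2 ^ k.-1.
Proof. case: k => // k _; rewrite dm /D /=; lia. Qed.

Lemma dec k m : 0 < k -> d k m = d k m.+1 + 1 -> 2 ^ k %| m.+1 + d k m.+1.
Proof.
case: k => // k _; rewrite !dm.
have p0 : 0 < 2^k by rewrite expn_gt0.
have N0 : 0 < 2 * 2^k by lia.
rewrite /dvdn expnS -modnDml modS //.
have := ltn_pmod m N0.
case: eqP => [E|ne] h; rewrite /D.
  move=> _; have -> : 0 + (2 ^ k - (0 - 2 ^ k + (2 ^ k - 0))) = 0 by lia.
  by rewrite mod0n.
move=> H; apply/eqP.
have -> : (m %% (2 * 2 ^ k)).+1 + (2 ^ k - ((m %% (2 * 2 ^ k)).+1 - 2 ^ k + (2 ^ k - (m %% (2 * 2 ^ k)).+1))) = 2 * 2 ^ k.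
  move: H; rewrite /D; lia.
by rewrite modnn.
Qed.

Lemma inc k m : 0 < k -> d k m.+1 = d k m + 1 -> 2 ^ k %| m - d k m /\ d k m <= m.
Proof.
case: k => // k _; rewrite !dm.
have p0 : 0 < 2^k by rewrite expn_gt0.
have N0 : 0 < 2 * 2^k by lia.
rewrite modS //.
have := ltn_pmod m N0; have := leq_mod m (2 * 2^k).
case: eqP => [E|ne] h1 h2; rewrite /D.
  lia.
move=> H.
have E : 2 ^ k - (m %% (2 * 2 ^ k) - 2 ^ k + (2 ^ k - m %% (2 * 2 ^ k))) = m %% (2 * 2^k).
  move: H; lia.
rewrite E; split=> //.
rewrite expnS {1}(divn_eq m (2 * 2^k)) addnK; exact: dvdn_mull.
Qed.

Lemma two k m : 0 < k -> d k m = 2 -> m %% 4 = 2.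
Proof.
case: k => // k _ H.
have := bound k.+1 m erefl; rewrite H /=.
case: k H => [|k]; first by rewrite /= expn0.
move=> H _; move: H; rewrite dm expnS.
have -> : 2 * (2 * 2 ^ k) = 4 * 2 ^ k by rewrite mulnA.
have p0 : 0 < 2^k by rewrite expn_gt0.
have := ltn_pmod m (_ : 0 < 4 * 2^k) => /(_ ltac:(lia)).
have h4 : (m %% (4 * 2 ^ k)) %% 4 = m %% 4 by rewrite modn_dvdm // dvdn_mulr.
move: h4; set r := m %% (4 * 2 ^ k); rewrite /D => h4 hr H.
rewrite -h4.
have [E|E] : r = 2 \/ r = 4 * 2 ^ k - 2 by lia.
  by rewrite E.
rewrite E.
have -> : 4 * 2 ^ k - 2 = (2 ^ k).-1 * 4 + 2 by lia.
by rewrite modnMDl.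
Qed.

Lemma small2 i : 2 ^ i %| 2 -> i <= 1.
Proof.
case: i => // [] [] // i /(dvdn_leq (erefl : 0 < 2)).
rewrite !expnS; have := expn_gt0 2 i; lia.
Qed.

Lemma d3 n : n %% 4 = 1 \/ n %% 4 = 2 -> d 3 (2 * n + 1) = 3.
Proof.
rewrite dm /D /=.
have -> : 2 * 4 = 2 * 4 by [].
rewrite (mod2 4 n) //; case=> ->; by [].
Qed.

Theorem lemma12 (i j n : nat) :
  0 < i -> 0 < j ->
  (d j n.+1 = d i n + 1 \/ d j n.+1 + 1 = d i n) ->
  exists l : nat, (l = 3 \/ l = i.+1 \/ l = j.+1) /\
    d j n.+1 + d i n = d l (2 * n + 1).
Proof.
move=> i0 j0 H.
have Si := step i n i0; have Sj := step j n j0.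
have Mi := mid i n i0; have Mj := mid j n j0.
case: (eqVneq (d j n.+1) (d i n.+1)) => [E|E1].
  by exists i.+1; split; [by right; left | rewrite E addnC Mi].
case: (eqVneq (d i n) (d j n)) => [E|E2].
  by exists j.+1; split; [by right; right | rewrite E addnC Mj].
exists 3; split; first by left.
have Bi := bound i n.+1 i0; have Bj := bound j n j0.
have Bi' := bound i n i0; have Bj' := bound j n.+1 j0.
have [[Da Db]|[Ia Ib]] :
  (d i n = d i n.+1 + 1 /\ d j n = d j n.+1 + 1) \/
  (d i n.+1 = d i n + 1 /\ d j n.+1 = d j n + 1).
  move/eqP: E1; move/eqP: E2; lia.
-
  have Ej : d j n.+1 = d i n.+1 + 2 by move/eqP: E1; move/eqP: E2; lia.
  have Hi := dec i n i0 Da; have Hj := dec j n j0 Db.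
  have [le|le] := leqP i j.
  + have Hi' : 2 ^ i %| n.+1 + d j n.+1 := dvdn_trans (dvdn_exp2l 2 le) Hj.
    rewrite Ej addnA (dvdn_addr _ Hi) in Hi'.
    have i1 : i = 1 by have := small2 _ Hi'; clear -i0; lia.
    subst i; move: Bi Bi'; rewrite /= expn0 => Bi Bi'.
    have Dj : d j n.+1 = 2 by clear -Bi Bi' Ej Da; lia.
    have := two j n.+1 j0 Dj => h.
    rewrite d3; first by clear -Dj Da Ej; lia.
    left; move: h; rewrite -addn1 -modnDml; case: (n %% 4) (ltn_pmod n (erefl : 0 < 4)) => [|[|[|[|]]]] //.
  + have Hj' : 2 ^ j %| n.+1 + d i n.+1 := dvdn_trans (dvdn_exp2l 2 (ltnW le)) Hi.
    rewrite Ej addnA in Hj. rewrite (dvdn_addr _ Hj') in Hj.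
    have j1 : j = 1 by have := small2 _ Hj; clear -j0; lia.
    subst j; move: Bj; rewrite /= expn0; clear -Db Ej; lia.
-
  have Ej : d i n = d j n + 2 by move/eqP: E1; move/eqP: E2; lia.
  have [Hi ri] := inc i n i0 Ia; have [Hj rj] := inc j n j0 Ib.
  have e : n - d j n = (n - d i n) + 2 by clear -Ej ri rj; lia.
  have [le|le] := leqP j i.
  + have Hj' : 2 ^ j %| n - d i n := dvdn_trans (dvdn_exp2l 2 le) Hi.
    rewrite e (dvdn_addr _ Hj') in Hj.
    have j1 : j = 1 by have := small2 _ Hj; clear -j0; lia.
    subst j; move: Bj Bj'; rewrite /= expn0 => Bj Bj'.
    have Di : d i n = 2 by clear -Bj Bj' Ej Ib; lia.
    have := two i n i0 Di => h.
    rewrite d3; [clear -Di Ej Ib; lia | by right].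
  + have Hi' : 2 ^ i %| n - d j n := dvdn_trans (dvdn_exp2l 2 (ltnW le)) Hj.
    rewrite e (dvdn_addr _ Hi) in Hi'.
    have i1 : i = 1 by have := small2 _ Hi'; clear -i0; lia.
    subst i; move: Bi; rewrite /= expn0; clear -Ia H Ej; lia.
Qed.
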